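(* Let $M$ be a monoidal category and $C,D$ be $M$-actegories. Let $m\in M$, $\alpha:x\to m\odot_C y$ in $C$ and $\beta:m\odot_D v\to u$ in $D$, and let $l=\langle\alpha\mid\beta\rangle_m\in\mathit{Optic}_{C,D}((x,u),(y,v))$. Then the 2-cell $R_x\otimes L_u\Rightarrow R_y\otimes L_v$ in $\mathit{Tamb}_{C,D}$ corresponding to $l$ equals the composite $$R_x\otimes L_u\xrightarrow{R_\alpha\otimes L_\beta}R_{m\odot y}\otimes L_{m\odot v}\cong R_y\otimes R_m\otimes L_m\otimes L_v\xrightarrow{R_y\otimes\varepsilon_m\otimes L_v}R_y\otimes M(-,=)\otimes L_v\cong R_y\otimes L_v,$$ where $R_m,L_m\in\mathit{Tamb}_{M,M}$ are formed with $m$ regarded as an object of the $M$-actegory $M$, $\varepsilon_m:R_m\otimes L_m\Rightarrow M(-,=)$ is the 2-cell given by composition $\int^{n}M(k,n\otimes m)\times M(n\otimes m,k')\to M(k,k')$, the isomorphism $R_y\otimes R_m\cong R_{m\odot y}$ sends $(h,g)$ with $h:c\to n\odot y$, $g:n\to k\otimes m$ to $h;(g\odot y);a_{k,m,y}$, the isomorphism $L_m\otimes L_v\cong L_{m\odot v}$ sends $(g,h)$ with $g:k\otimes m\to n$, $h:n\odot v\to d$ to $a^{-1}_{k,m,v};(g\odot v);h$, and the remaining isomorphisms are bicategorical associators and unitors.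
   Context: $(M,\otimes,I,\lambda,a)$ is a monoidal category; an $M$-actegory is a category $C$ with a functor $\odot:M\times C\to C$ and coherent natural isomorphisms $\lambda_x:I\odot x\to x$, $a_{m,n,x}:(m\otimes n)\odot x\to m\odot(n\odot x)$; $M$ is an $M$-actegory via $\otimes$. Composition is diagrammatic ($f;g$ = $f$ then $g$). $\mathit{Optic}_{C,D}((x,u),(y,v))=\int^{m}C(x,m\odot y)\times D(m\odot v,u)$, elements $\langle\alpha\mid\beta\rangle_m$ modulo $\langle\alpha;(f\odot y)\mid\beta\rangle_m=\langle\alpha\mid(f\odot v);\beta\rangle_n$ for $f:n\to m$; composition $\langle\alpha\mid\beta\rangle_m;\langle\alpha'\mid\beta'\rangle_n=\langle\alpha;(m\odot\alpha');a^{-1}\mid a;(m\odot\beta');\beta\rangle_{m\otimes n}$, identity $\langle\lambda^{-1}_x\mid\lambda_u\rangle_I$. $\mathit{Tamb}$: the bicategory of $M$-actegories whose hom-category $\mathit{Tamb}_{C,D}$ consists of functors $P:C^{op}\times D\to\mathrm{Set}$ with compatible strength maps $P(c,d)\to P(m\odot c,m\odot d)$ and strength-preserving natural transformations; identity 1-cells are hom-profunctors; composition $(P\otimes Q)(c,e)=\int^{d}P(c,d)\times Q(d,e)$. For an actegory $E$ and $x\in E$: $R_x\in\mathit{Tamb}_{E,M}$ is $(c,n)\mapsto E(c,n\odot x)$; $L_x\in\mathit{Tamb}_{M,E}$ is $(n,c)\mapsto E(n\odot x,c)$ (strengths induced by the action and associator). For $f:x\to x'$ in $E$, $R_f:R_x\Rightarrow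 R_{x'}$ postcomposes with $n\odot f$, $L_f:L_{x'}\Rightarrow L_x$ precomposes with $n\odot f$. An optic $l:(x,u)\to(y,v)$ corresponds to the unique 2-cell $\theta:R_x\otimes L_u\Rightarrow R_y\otimes L_v$ whose $(x,u)$-component sends the identity optic $\mathrm{id}_{(x,u)}\in(R_x\otimes L_u)(x,u)=\mathit{Optic}_{C,D}((x,u),(x,u))$ to $l$ (this is a bijection). *)

(* Defs.v *)
(* Composition is diagrammatic: f >> g. *)
From Stdlib Require Import ClassicalEpsilon.

Set Implicit Arguments.
Unset Strict Implicit.

Record Cat := {
  ob :> Type;
  hom : ob -> ob -> Type;
  idm : forall a, hom a a;
  cmp : forall a b e, hom a b -> hom b e -> hom a e
}.
Arguments hom {c} _ _.
Arguments idm {c} _.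
Arguments cmp {c a b e} _ _.

Infix ">>" := cmp (at level 40, left associativity).

Definition is_cat (C : Cat) : Prop :=
  (forall (a b : C) (f : hom a b), idm a >> f = f) /\
  (forall (a b : C) (f : hom a b), f >> idm b = f) /\
  (forall (a b c d : C) (f : hom a b) (g : hom b c) (h : hom c d),
      (f >> g) >> h = f >> (g >> h)).

Record MonCat := {
  mcat :> Cat;
  tens : mcat -> mcat -> mcat;
  tensm : forall (a a' b b' : mcat), hom a a' -> hom b b' -> hom (tens a b) (tens a' b');
  munit : mcat;
  mlam : forall a : mcat, hom (tens munit a) a;
  mlami : forall a : mcat, hom a (tens munit a);
  mrho : forall a : mcat, hom (tens a munit) a;
  mrhoi : forall a : mcat, hom a (tens a munit);
  masc : forall a b c : mcat, hom (tens (tens a b) c) (tens a (tens b c));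
  masci : forall a b c : mcat, hom (tens a (tens b c)) (tens (tens a b) c)
}.
Arguments tens {m} _ _.
Arguments tensm {m a a' b b'} _ _.
Arguments munit {m}.
Arguments mlam {m} _.
Arguments mlami {m} _.
Arguments mrho {m} _.
Arguments mrhoi {m} _.
Arguments masc {m} _ _ _.
Arguments masci {m} _ _ _.

Definition is_moncat (M : MonCat) : Prop :=
  is_cat M /\
  (forall a b : M, tensm (idm a) (idm b) = idm (tens a b)) /\
  (forall (a a' a'' b b' b'' : M) (f : hom a a') (f' : hom a' a'')
          (g : hom b b') (g' : hom b' b''),
      tensm (f >> f') (g >> g') = tensm f g >> tensm f' g') /\
  (forall a : M, mlam a >> mlami a = idm _ /\ mlami a >> mlam a = idm _) /\
  (forall a : M, mrho a >> mrhoi a = idm _ /\ mrhoi a >> mrho a = idm _) /\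
  (forall a b c : M, masc a b c >> masci a b c = idm _ /\
                     masci a b c >> masc a b c = idm _) /\
  (forall (a b : M) (f : hom a b), tensm (idm munit) f >> mlam b = mlam a >> f) /\
  (forall (a b : M) (f : hom a b), tensm f (idm munit) >> mrho b = mrho a >> f) /\
  (forall (a a' b b' c c' : M) (f : hom a a') (g : hom b b') (h : hom c c'),
      tensm (tensm f g) h >> masc a' b' c' = masc a b c >> tensm f (tensm g h)) /\
  (forall a b c d : M,
      masc (tens a b) c d >> masc a b (tens c d) =
      tensm (masc a b c) (idm d) >> masc a (tens b c) d >> tensm (idm a) (masc b c d)) /\
  (forall a b : M, masc a munit b >> tensm (idm a) (mlam b) = tensm (mrho a) (idm b)).

Record Act (M : MonCat) := {
  acat :> Cat;
  act : M -> acat -> acat;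
  actm : forall (m m' : M) (x x' : acat), hom m m' -> hom x x' -> hom (act m x) (act m' x');
  alam : forall x : acat, hom (act munit x) x;
  alami : forall x : acat, hom x (act munit x);
  aasc : forall (m n : M) (x : acat), hom (act (tens m n) x) (act m (act n x));
  aasci : forall (m n : M) (x : acat), hom (act m (act n x)) (act (tens m n) x)
}.
Arguments act {M a} _ _.
Arguments actm {M a m m' x x'} _ _.
Arguments alam {M a} _.
Arguments alami {M a} _.
Arguments aasc {M a} _ _ _.
Arguments aasci {M a} _ _ _.

Definition is_act (M : MonCat) (C : Act M) : Prop :=
  is_cat C /\
  (forall (m : M) (x : C), actm (idm m) (idm x) = idm (act m x)) /\
  (forall (m m' m'' : M) (x x' x'' : C) (f : hom m m') (f' : hom m' m'')
          (g : hom x x') (g' : hom x' x''),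
      actm (f >> f') (g >> g') = actm f g >> actm f' g') /\
  (forall x : C, alam x >> alami x = idm _ /\ alami x >> alam x = idm _) /\
  (forall (m n : M) (x : C), aasc m n x >> aasci m n x = idm _ /\
                             aasci m n x >> aasc m n x = idm _) /\
  (forall (x x' : C) (f : hom x x'), actm (idm munit) f >> alam x' = alam x >> f) /\
  (forall (m m' n n' : M) (x x' : C) (f : hom m m') (g : hom n n') (h : hom x x'),
      actm (tensm f g) h >> aasc m' n' x' = aasc m n x >> actm f (actm g h)) /\
  (forall (m n p : M) (x : C),
      aasc (tens m n) p x >> aasc m n (act p x) =
      actm (masc m n p) (idm x) >> aasc m (tens n p) x >> actm (idm m) (aasc n p x)) /\
  (forall (m : M) (x : C), aasc m munit x >> actm (idm m) (alam x) = actm (mrho m) (idm x)) /\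
  (forall (m : M) (x : C), aasc munit m x >> alam (act m x) = actm (mlam m) (idm x)).

Definition selfAct (M : MonCat) : Act M :=
  {| acat := mcat M; act := @tens M; actm := @tensm M;
     alam := @mlam M; alami := @mlami M; aasc := @masc M; aasci := @masci M |}.

Inductive eqv_clos (T : Type) (R : T -> T -> Prop) : T -> T -> Prop :=
| eqv_base : forall x y, R x y -> eqv_clos R x y
| eqv_refl : forall x, eqv_clos R x x
| eqv_sym : forall x y, eqv_clos R x y -> eqv_clos R y x
| eqv_trans : forall x y z, eqv_clos R x y -> eqv_clos R y z -> eqv_clos R x z.

Definition Quot (T : Type) (R : T -> T -> Prop) : Type :=
  { P : T -> Prop | exists x, P = eqv_clos R x }.

Definition qpi (T : Type) (R : T -> T -> Prop) (x : T) : Quot R :=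
  exist _ (eqv_clos R x) (ex_intro _ x eq_refl).

(* a chosen representative; maps out of a quotient are defined on it *)
Definition qrepr (T : Type) (R : T -> T -> Prop) (q : Quot R) : T :=
  proj1_sig (constructive_indefinite_description _ (proj2_sig q)).

Record Prof (C D : Cat) := {
  pob :> C -> D -> Type;
  plm : forall (c' c : C) (d : D), hom c' c -> pob c d -> pob c' d;
  prm : forall (c : C) (d d' : D), hom d d' -> pob c d -> pob c d'
}.
Arguments plm {C D p c' c d} _ _.
Arguments prm {C D p c d d'} _ _.

(* representatives of  \int^d P(c,d) x Q(d,e) *)
Definition ctriple (C D E : Cat) (P : Prof C D) (Q : Prof D E) (c : C) (e : E) : Type :=
  { d : D & (P c d * Q d e)%type }.

Inductive crel (C D E : Cat) (P : Prof C D) (Q : Prof D E) (c : C) (e : E) :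
    ctriple P Q c e -> ctriple P Q c e -> Prop :=
| crel_intro : forall (d d' : D) (f : hom d d') (p : P c d) (q : Q d' e),
    crel (existT _ d' (prm f p, q)) (existT _ d (p, plm f q)).

Definition coend (C D E : Cat) (P : Prof C D) (Q : Prof D E) (c : C) (e : E) : Type :=
  Quot (@crel C D E P Q c e).

Definition cpi (C D E : Cat) (P : Prof C D) (Q : Prof D E) (c : C) (e : E)
  (d : D) (p : P c d) (q : Q d e) : coend P Q c e :=
  qpi (@crel C D E P Q c e) (existT _ d (p, q)).
Arguments cpi {C D E} P Q {c e d} p q.

Definition pcomp (C D E : Cat) (P : Prof C D) (Q : Prof D E) : Prof C E :=
  {| pob := fun c e => coend P Q c e;
     plm := fun c' c e h z =>
       let t := qrepr z in
       cpi P Q (plm h (fst (projT2 t))) (snd (projT2 t));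
     prm := fun c e e' k z =>
       let t := qrepr z in
       cpi P Q (fst (projT2 t)) (prm k (snd (projT2 t))) |}.

Definition HomP (C : Cat) : Prof C C :=
  {| pob := fun a b => hom a b;
     plm := fun a' a b h f => h >> f;
     prm := fun a b b' k f => f >> k |}.

Record Tamb (M : MonCat) (C D : Act M) := {
  tprof :> Prof C D;
  tst : forall (m : M) (c : C) (d : D), tprof c d -> tprof (act m c) (act m d)
}.
Arguments tst {M C D t} m {c d} _.

Definition tcomp (M : MonCat) (C D E : Act M) (P : Tamb C D) (Q : Tamb D E) : Tamb C E :=
  {| tprof := pcomp P Q;
     tst := fun m c e z =>
       let t := qrepr z in
       cpi P Q (tst m (fst (projT2 t))) (tst m (snd (projT2 t))) |}.

Definition RProf (M : MonCat) (E : Act M) (x : E) : Prof E M :=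
  {| pob := fun c n => hom c (act n x);
     plm := fun c' c n h f => h >> f;
     prm := fun c n n' g f => f >> actm g (idm x) |}.

Definition RTamb (M : MonCat) (E : Act M) (x : E) : Tamb E (selfAct M) :=
  @Build_Tamb M E (selfAct M) (RProf x)
    (fun m c n (f : hom c (act n x)) => actm (idm m) f >> aasci m n x).

Definition LProf (M : MonCat) (E : Act M) (x : E) : Prof M E :=
  {| pob := fun n c => hom (act n x) c;
     plm := fun n' n c g f => actm g (idm x) >> f;
     prm := fun n c c' k f => f >> k |}.

Definition LTamb (M : MonCat) (E : Act M) (x : E) : Tamb (selfAct M) E :=
  @Build_Tamb M (selfAct M) E (LProf x)
    (fun m n c (f : hom (act n x) c) => aasc m n x >> actm (idm m) f).

Definition Cell (C D : Cat) (P Q : Prof C D) : Type := forall (c : C) (d : D), P c d -> Q c d.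

Definition is_natural (C D : Cat) (P Q : Prof C D) (th : Cell P Q) : Prop :=
  (forall (c' c : C) (d : D) (h : hom c' c) (p : P c d), th c' d (plm h p) = plm h (th c d p)) /\
  (forall (c : C) (d d' : D) (k : hom d d') (p : P c d), th c d' (prm k p) = prm k (th c d p)).

Definition is_tamb_cell (M : MonCat) (C D : Act M) (P Q : Tamb C D) (th : Cell P Q) : Prop :=
  is_natural th /\
  (forall (m : M) (c : C) (d : D) (p : P c d), th _ _ (tst m p) = tst m (th c d p)).

Definition idc (C D : Cat) (P : Prof C D) : Cell P P := fun c d p => p.
Arguments idc {C D} P _ _ _.

Definition hcomp (C D E : Cat) (P P' : Prof C D) (Q Q' : Prof D E)
  (s : Cell P P') (t : Cell Q Q') : Cell (pcomp P Q) (pcomp P' Q') :=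
  fun c e z =>
    let w := qrepr z in
    cpi P' Q' (s c _ (fst (projT2 w))) (t _ e (snd (projT2 w))).

Arguments hcomp {C D E P P' Q Q'} s t c d _.

Definition assoc (B C D E : Cat) (P : Prof B C) (Q : Prof C D) (R : Prof D E) :
  Cell (pcomp (pcomp P Q) R) (pcomp P (pcomp Q R)) :=
  fun b e z =>
    let w := qrepr z in
    let v := qrepr (fst (projT2 w)) in
    cpi P (pcomp Q R) (fst (projT2 v)) (cpi Q R (snd (projT2 v)) (snd (projT2 w))).

Definition assoc_inv (B C D E : Cat) (P : Prof B C) (Q : Prof C D) (R : Prof D E) :
  Cell (pcomp P (pcomp Q R)) (pcomp (pcomp P Q) R) :=
  fun b e z =>
    let w := qrepr z in
    let v := qrepr (snd (projT2 w)) in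
    cpi (pcomp P Q) R (cpi P Q (fst (projT2 w)) (fst (projT2 v))) (snd (projT2 v)).

Arguments assoc {B C D E} P Q R _ _ _.
Arguments assoc_inv {B C D E} P Q R _ _ _.

Definition lunit (C D : Cat) (P : Prof C D) : Cell (pcomp (HomP C) P) P :=
  fun c d z => let w := qrepr z in plm (fst (projT2 w)) (snd (projT2 w)).
Arguments lunit {C D} P _ _ _.

Definition Rcell (M : MonCat) (E : Act M) (x x' : E) (f : hom x x') :
  Cell (RProf x) (RProf x') := fun c n g => g >> actm (idm n) f.

Definition Lcell (M : MonCat) (E : Act M) (x x' : E) (f : hom x x') :
  Cell (LProf x') (LProf x) := fun n c g => actm (idm n) f >> g.

Arguments Rcell {M E x x'} f c d _.
Arguments Lcell {M E x x'} f c d _.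

Definition counit (M : MonCat) (m : M) :
  Cell (pcomp (RProf (E := selfAct M) m) (LProf (E := selfAct M) m)) (HomP M) :=
  fun k k' z => let w := qrepr z in (fst (projT2 w) : hom k (tens _ m)) >> snd (projT2 w).

Arguments counit {M} m c d _.

Definition phiR (M : MonCat) (C : Act M) (m : M) (y : C) :
  Cell (pcomp (RProf y) (RProf (E := selfAct M) m)) (RProf (act m y)) :=
  fun c k z =>
    let w := qrepr z in
    fst (projT2 w) >> actm (snd (projT2 w) : hom _ (tens k m)) (idm y) >> aasc k m y.

Arguments phiR {M C} m y c d _.

Definition phiL (M : MonCat) (D : Act M) (m : M) (v : D) :
  Cell (pcomp (LProf (E := selfAct M) m) (LProf v)) (LProf (act m v)) :=
  fun k d z =>
    let w := qrepr z in
    aasci k m v >> actm (fst (projT2 w) : hom (tens k m) _) (idm v) >> snd (projT2 w).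

Arguments phiL {M D} m v c d _.

Definition optic (M : MonCat) (C D : Act M) (x y : C) (u v : D) (m : M)
  (al : hom x (act m y)) (be : hom (act m v) u) : coend (RProf y) (LProf v) x u :=
  cpi (RProf y) (LProf v) (d := m) al be.

Definition id_optic (M : MonCat) (C D : Act M) (x : C) (u : D) :
  coend (RProf x) (LProf u) x u :=
  cpi (RProf x) (LProf u) (d := munit) (alami x) (alam u).

(* The composite 2-cell of the statement, with the bracketing
   R_y (x) ((R_m (x) L_m) (x) L_v) for the middle step; psiR, psiL are the
   inverses of the isomorphisms phiR, phiL. *)
Definition composite (M : MonCat) (C D : Act M) (x y : C) (u v : D) (m : M)
  (al : hom x (act m y)) (be : hom (act m v) u)
  (psiR : Cell (RProf (act m y)) (pcomp (RProf y) (RProf (E := selfAct M) m)))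
  (psiL : Cell (LProf (act m v)) (pcomp (LProf (E := selfAct M) m) (LProf v))) :
  Cell (pcomp (RProf x) (LProf u)) (pcomp (RProf y) (LProf v)) :=
  fun c d z =>
    hcomp (idc (RProf y)) (lunit (LProf v)) c d
   (hcomp (idc (RProf y)) (hcomp (counit m) (idc (LProf v))) c d
   (hcomp (idc (RProf y)) (assoc_inv (RProf (E := selfAct M) m) (LProf (E := selfAct M) m) (LProf v)) c d
   (assoc (RProf y) (RProf (E := selfAct M) m) (pcomp (LProf (E := selfAct M) m) (LProf v)) c d
   (hcomp psiR psiL c d
   (hcomp (Rcell al) (Lcell be) c d z))))).
Arguments composite {M C D x y u v m} al be psiR psiL c d _.

(* Main.v *)
Require Import Defs.
From Stdlib Require Import ClassicalEpsilon ProofIrrelevance FunctionalExtensionality PropExtensionality.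
Set Implicit Arguments.
Unset Strict Implicit.

Lemma sig_eq (A : Type) (P : A -> Prop) (x y : sig P) : proj1_sig x = proj1_sig y -> x = y.
Proof. destruct x, y; simpl; intros ->; f_equal; apply proof_irrelevance. Qed.

Lemma qpi_eq (T : Type) (R : T -> T -> Prop) (a b : T) : eqv_clos R a b -> qpi R a = qpi R b.
Proof.
  intros H. apply sig_eq. simpl.
  apply functional_extensionality; intro z; apply propositional_extensionality; split; intro Hz.
  - eapply eqv_trans; [apply eqv_sym; exact H| exact Hz].
  - eapply eqv_trans; [exact H | exact Hz].
Qed.

Lemma qrepr_rel (T : Type) (R : T -> T -> Prop) (t : T) : eqv_clos R t (qrepr (qpi R t)).
Proof.
  unfold qrepr. destruct (constructive_indefinite_description _ _) as [x Hx]. simpl in *.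
  assert (H : eqv_clos R x x) by apply eqv_refl. rewrite <- Hx in H. exact H.
Qed.

Lemma lift (T : Type) (R : T -> T -> Prop) (X : Type) (F : T -> X) :
  (forall a b, R a b -> F a = F b) -> forall t, F (qrepr (qpi R t)) = F t.
Proof.
  intros HF t. assert (G : forall a b, eqv_clos R a b -> F a = F b).
  { induction 1; auto. congruence. }
  symmetry; apply G, qrepr_rel.
Qed.

Lemma qsurj (T : Type) (R : T -> T -> Prop) (q : Quot R) : q = qpi R (qrepr q).
Proof.
  destruct q as [P HP]. unfold qrepr. destruct (constructive_indefinite_description _ _) as [y Hy].
  simpl in *. apply sig_eq. simpl. exact Hy.
Qed.

Lemma cpi_surj (C D E : Cat) (P : Prof C D) (Q : Prof D E) c e (z : coend P Q c e) :
  exists d (p : P c d) (q : Q d e), z = cpi P Q p q.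
Proof.
  unfold coend in z. rewrite (qsurj z). destruct (qrepr z) as [d [p q]]. exists d, p, q. reflexivity.
Qed.

Lemma cpi_rel (C D E : Cat) (P : Prof C D) (Q : Prof D E) c e (d d' : D) (f : hom d d')
  (p : P c d) (q : Q d' e) : cpi P Q (prm f p) q = cpi P Q p (plm f q).
Proof. apply qpi_eq, eqv_base. constructor. Qed.

Definition ichg (C D : Cat) (P : Prof C D) : Prop :=
  forall (c' c : C) (d d' : D) (h : hom c' c) (k : hom d d') (p : P c d),
    plm h (prm k p) = prm k (plm h p).

Lemma plm_cpi (C D E : Cat) (P : Prof C D) (Q : Prof D E) (HP : ichg P) c' c e (h : hom c' c)
  d (p : P c d) (q : Q d e) : plm (p := pcomp P Q) h (cpi P Q p q) = cpi P Q (plm h p) q.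
Proof.
  simpl. unfold cpi.
  apply (lift (F := fun t : ctriple P Q c e => cpi P Q (plm h (fst (projT2 t))) (snd (projT2 t)))).
  intros a b []. simpl. rewrite (HP _ _ _ _ h f p0). apply cpi_rel.
Qed.

Lemma prm_cpi (C D E : Cat) (P : Prof C D) (Q : Prof D E) (HQ : ichg Q) c e e' (k : hom e e')
  d (p : P c d) (q : Q d e) : prm (p := pcomp P Q) k (cpi P Q p q) = cpi P Q p (prm k q).
Proof.
  simpl. unfold cpi.
  apply (lift (F := fun t : ctriple P Q c e => cpi P Q (fst (projT2 t)) (prm k (snd (projT2 t))))).
  intros a b []. simpl. rewrite <- HQ. apply cpi_rel.
Qed.

Lemma pcomp_ichg (C D E : Cat) (P : Prof C D) (Q : Prof D E) : ichg P -> ichg Q -> ichg (pcomp P Q).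
Proof.
  intros HP HQ c' c e e' h k z. destruct (cpi_surj z) as (d & p & q & ->).
  rewrite prm_cpi, !plm_cpi, prm_cpi; auto.
Qed.

Definition rnat (C D : Cat) (P Q : Prof C D) (s : Cell P Q) : Prop :=
  forall c d d' (k : hom d d') p, s c d' (prm k p) = prm k (s c d p).
Definition lnat (C D : Cat) (P Q : Prof C D) (s : Cell P Q) : Prop :=
  forall c' c d (h : hom c' c) p, s c' d (plm h p) = plm h (s c d p).

Lemma hcomp_cpi (C D E : Cat) (P P' : Prof C D) (Q Q' : Prof D E)
  (s : Cell P P') (t : Cell Q Q') : rnat s -> lnat t ->
  forall c e d (p : P c d) (q : Q d e), hcomp s t c e (cpi P Q p q) = cpi P' Q' (s _ _ p) (t _ _ q).
Proof.
  intros Hs Ht c e d p q. unfold hcomp, cpi.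
  apply (lift (F := fun w : ctriple P Q c e => cpi P' Q' (s c _ (fst (projT2 w))) (t _ e (snd (projT2 w))))).
  intros a b []. simpl. rewrite Hs, Ht. apply cpi_rel.
Qed.

Lemma idc_rnat (C D : Cat) (P : Prof C D) : rnat (idc P).
Proof. intros ? ? ? ? ?; reflexivity. Qed.
Lemma idc_lnat (C D : Cat) (P : Prof C D) : lnat (idc P).
Proof. intros ? ? ? ? ?; reflexivity. Qed.

Lemma assoc_cpi (B C D E : Cat) (P : Prof B C) (Q : Prof C D) (R : Prof D E)
  (HP : ichg P) (HQ : ichg Q) (HR : ichg R) b e c d (p : P b c) (q : Q c d) (r : R d e) :
  assoc P Q R b e (cpi (pcomp P Q) R (cpi P Q p q) r) = cpi P (pcomp Q R) p (cpi Q R q r).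
Proof.
  assert (Inner : forall d (w : pcomp P Q b d) (r : R d e) c (p : P b c) (q : Q c d),
     w = cpi P Q p q ->
     (let v := qrepr w in cpi P (pcomp Q R) (fst (projT2 v)) (cpi Q R (snd (projT2 v)) r))
     = cpi P (pcomp Q R) p (cpi Q R q r)).
  { intros d0 w r0 c0 p0 q0 ->. simpl. unfold cpi at 1 2.
    apply (lift (F := fun v : ctriple P Q b d0 => cpi P (pcomp Q R) (fst (projT2 v)) (cpi Q R (snd (projT2 v)) r0))).
    intros a0 b0 []. simpl. rewrite cpi_rel. f_equal. rewrite plm_cpi; auto. }
  unfold assoc. unfold cpi at 1.
  etransitivity.
  { apply (lift (F := fun w : ctriple (pcomp P Q) R b e =>
    let v := qrepr (fst (projT2 w)) in
    cpi P (pcomp Q R) (fst (projT2 v)) (cpi Q R (snd (projT2 v)) (snd (projT2 w))))).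
    intros a0 b0 []. cbn [projT1 projT2 fst snd].
    destruct (cpi_surj p0) as (c1 & p1 & q1 & ->).
    rewrite prm_cpi by auto. rewrite (Inner _ _ _ _ p1 (prm f q1) eq_refl).
    rewrite (Inner _ _ _ _ p1 q1 eq_refl). f_equal. apply cpi_rel. }
  simpl. apply Inner. reflexivity.
Qed.

Lemma assoc_inv_cpi (B C D E : Cat) (P : Prof B C) (Q : Prof C D) (R : Prof D E)
  (HP : ichg P) (HQ : ichg Q) (HR : ichg R) b e c d (p : P b c) (q : Q c d) (r : R d e) :
  assoc_inv P Q R b e (cpi P (pcomp Q R) p (cpi Q R q r)) = cpi (pcomp P Q) R (cpi P Q p q) r.
Proof.
  assert (Inner : forall c (w : pcomp Q R c e) (p : P b c) d (q : Q c d) (r : R d e),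
     w = cpi Q R q r ->
     (let v := qrepr w in cpi (pcomp P Q) R (cpi P Q p (fst (projT2 v))) (snd (projT2 v)))
     = cpi (pcomp P Q) R (cpi P Q p q) r).
  { intros c0 w p0 d0 q0 r0 ->. cbv zeta. unfold cpi at 1 2.
    apply (lift (F := fun v : ctriple Q R c0 e => cpi (pcomp P Q) R (cpi P Q p0 (fst (projT2 v))) (snd (projT2 v)))).
    intros a0 b0 []. cbn [projT1 projT2 fst snd]. rewrite <- cpi_rel. f_equal. rewrite prm_cpi; auto. }
  unfold assoc_inv. unfold cpi at 1.
  etransitivity.
  { apply (lift (F := fun w : ctriple P (pcomp Q R) b e =>
    let v := qrepr (snd (projT2 w)) in
    cpi (pcomp P Q) R (cpi P Q (fst (projT2 w)) (fst (projT2 v))) (snd (projT2 v)))).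
    intros a0 b0 []. cbn [projT1 projT2 fst snd].
    destruct (cpi_surj q0) as (c1 & p1 & q1 & ->).
    rewrite plm_cpi by auto. rewrite (Inner _ _ _ _ (plm f p1) q1 eq_refl).
    rewrite (Inner _ _ _ _ p1 q1 eq_refl). f_equal. apply cpi_rel. }
  cbn [projT1 projT2 fst snd]. apply Inner. reflexivity.
Qed.

Lemma assoc_inv_lnat (B C D E : Cat) (P : Prof B C) (Q : Prof C D) (R : Prof D E)
  (HP : ichg P) (HQ : ichg Q) (HR : ichg R) : lnat (assoc_inv P Q R).
Proof.
  intros b' b e h z. destruct (cpi_surj z) as (c & p & w & ->).
  destruct (cpi_surj w) as (d & q & r & ->).
  rewrite plm_cpi by auto. rewrite !assoc_inv_cpi by auto.
  rewrite plm_cpi by (apply pcomp_ichg; auto). rewrite plm_cpi by auto. reflexivity.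
Qed.

Lemma hcomp_lnat (C D E : Cat) (P P' : Prof C D) (Q Q' : Prof D E)
  (s : Cell P P') (t : Cell Q Q') : ichg P -> ichg P' -> rnat s -> lnat s -> lnat t -> lnat (hcomp s t).
Proof.
  intros HP HP' Hs Hs' Ht c' c e h z. destruct (cpi_surj z) as (d & p & q & ->).
  rewrite plm_cpi by auto. rewrite !hcomp_cpi by auto. rewrite plm_cpi by auto.
  rewrite Hs'. reflexivity.
Qed.

Lemma cA (C : Cat) (H : is_cat C) (a b c d : C) (f : hom a b) (g : hom b c) (h : hom c d) :
  (f >> g) >> h = f >> (g >> h).
Proof. apply H. Qed.
Lemma cL (C : Cat) (H : is_cat C) (a b : C) (f : hom a b) : idm a >> f = f.
Proof. apply H. Qed.
Lemma cR (C : Cat) (H : is_cat C) (a b : C) (f : hom a b) : f >> idm b = f.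
Proof. apply H. Qed.

Lemma mcat_of (M : MonCat) : is_moncat M -> is_cat M.
Proof. intros H; apply H. Qed.
Lemma acat_of (M : MonCat) (E : Act M) : is_act E -> is_cat E.
Proof. intros H; apply H. Qed.

Lemma act_idid (M : MonCat) (E : Act M) (HE : is_act E) (m : M) (x : E) :
  actm (idm m) (idm x) = idm (act m x).
Proof. apply HE. Qed.
Lemma act_comp (M : MonCat) (E : Act M) (HE : is_act E) (m m' m'' : M) (x x' x'' : E)
  (f : hom m m') (f' : hom m' m'') (g : hom x x') (g' : hom x' x'') :
  actm (f >> f') (g >> g') = actm f g >> actm f' g'.
Proof. apply HE. Qed.

Lemma act_split1 (M : MonCat) (E : Act M) (HM : is_moncat M) (HE : is_act E) (m m' : M) (x x' : E)
  (f : hom m m') (g : hom x x') : actm f g = actm f (idm x) >> actm (idm m') g.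
Proof. rewrite <- act_comp by auto. rewrite cR, cL; auto using mcat_of, acat_of. Qed.
Lemma act_split2 (M : MonCat) (E : Act M) (HM : is_moncat M) (HE : is_act E) (m m' : M) (x x' : E)
  (f : hom m m') (g : hom x x') : actm f g = actm (idm m) g >> actm f (idm x').
Proof. rewrite <- act_comp by auto. rewrite cR, cL; auto using mcat_of, acat_of. Qed.

Lemma act_idcomp (M : MonCat) (E : Act M) (HM : is_moncat M) (HE : is_act E) (m : M) (x x' x'' : E)
  (g : hom x x') (g' : hom x' x'') : actm (idm m) (g >> g') = actm (idm m) g >> actm (idm m) g'.
Proof. rewrite <- act_comp by auto. rewrite cL; auto using mcat_of. Qed.
Lemma act_compid (M : MonCat) (E : Act M) (HM : is_moncat M) (HE : is_act E) (m m' m'' : M) (x : E)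
  (f : hom m m') (f' : hom m' m'') : actm (f >> f') (idm x) = actm f (idm x) >> actm f' (idm x).
Proof. rewrite <- act_comp by auto. rewrite cL; auto using acat_of. Qed.

Lemma aasc_nat (M : MonCat) (E : Act M) (HE : is_act E) (m m' n n' : M) (x x' : E)
  (f : hom m m') (g : hom n n') (h : hom x x') :
  actm (tensm f g) h >> aasc m' n' x' = aasc m n x >> actm f (actm g h).
Proof. apply HE. Qed.

Lemma aasc_iso1 (M : MonCat) (E : Act M) (HE : is_act E) (m n : M) (x : E) :
  aasc m n x >> aasci m n x = idm _.
Proof. apply HE. Qed.
Lemma aasc_iso2 (M : MonCat) (E : Act M) (HE : is_act E) (m n : M) (x : E) :
  aasci m n x >> aasc m n x = idm _.
Proof. apply HE. Qed.

Lemma aasci_nat (M : MonCat) (E : Act M) (HE : is_act E) (m m' n n' : M) (x x' : E)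
  (f : hom m m') (g : hom n n') (h : hom x x') :
  aasci m n x >> actm (tensm f g) h = actm f (actm g h) >> aasci m' n' x'.
Proof.
  pose proof (acat_of HE) as Hc.
  rewrite <- (cR Hc (aasci m n x >> actm (tensm f g) h)).
  rewrite <- (aasc_iso1 HE m' n' x'). rewrite <- !(cA Hc).
  rewrite (cA Hc (aasci m n x)). rewrite aasc_nat by auto.
  rewrite <- (cA Hc). rewrite aasc_iso2 by auto. rewrite cL by auto. reflexivity.
Qed.

Lemma act_unit_r (M : MonCat) (E : Act M) (HM : is_moncat M) (HE : is_act E) (n : M) (x : E) :
  actm (idm n) (alami x) >> aasci n munit x = actm (mrhoi n) (idm x).
Proof.
  pose proof (acat_of HE) as Hc. pose proof (mcat_of HM) as Hm.
  assert (U : aasc n munit x >> actm (idm n) (alam x) = actm (mrho n) (idm x)) by apply HE.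
  assert (I1 : actm (mrho n) (idm x) >> actm (mrhoi n) (idm x) = idm _).
  { rewrite <- act_compid by auto. replace (mrho n >> mrhoi n) with (idm (tens n munit)) by (symmetry; apply HM).
    apply act_idid; auto. }
  rewrite <- (cR Hc (actm (idm n) (alami x) >> aasci n munit x)).
  rewrite <- I1. rewrite <- U. rewrite <- !(cA Hc).
  rewrite (cA Hc (actm (idm n) (alami x))). rewrite aasc_iso2 by auto. rewrite cR by auto.
  rewrite <- act_idcomp by auto. replace (alami x >> alam x) with (idm x) by (symmetry; apply HE).
  rewrite act_idid by auto. apply cL; auto.
Qed.

Lemma act_unit_r' (M : MonCat) (E : Act M) (HM : is_moncat M) (HE : is_act E) (n : M) (x : E) :
  actm (mrhoi n) (idm x) >> (aasc n munit x >> actm (idm n) (alam x)) = idm _.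
Proof.
  assert (U : aasc n munit x >> actm (idm n) (alam x) = actm (mrho n) (idm x)) by apply HE.
  rewrite U. rewrite <- act_compid by auto. replace (mrhoi n >> mrho n) with (idm n) by (symmetry; apply HM).
  apply act_idid; auto.
Qed.

Lemma RProf_ichg (M : MonCat) (E : Act M) (HE : is_cat E) (x : E) : ichg (RProf x).
Proof. intros c' c d d' h k p. simpl. symmetry; apply (cA HE). Qed.
Lemma LProf_ichg (M : MonCat) (E : Act M) (HE : is_cat E) (x : E) : ichg (LProf x).
Proof. intros c' c d d' h k p. simpl. symmetry; apply (cA HE). Qed.
Lemma HomP_ichg (C : Cat) (HC : is_cat C) : ichg (HomP C).
Proof. intros c' c d d' h k p. simpl. symmetry; apply (cA HC). Qed.
Lemma self_cat (M : MonCat) (HM : is_moncat M) : is_cat (selfAct M).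
Proof. exact (mcat_of HM). Qed.
Lemma RSelf_ichg (M : MonCat) (HM : is_moncat M) (m : M) : ichg (RProf (E := selfAct M) m).
Proof. exact (RProf_ichg (E := selfAct M) (x := m) (self_cat HM)). Qed.
Lemma LSelf_ichg (M : MonCat) (HM : is_moncat M) (m : M) : ichg (LProf (E := selfAct M) m).
Proof. exact (LProf_ichg (E := selfAct M) (x := m) (self_cat HM)). Qed.

Lemma Rcell_rnat (M : MonCat) (E : Act M) (HM : is_moncat M) (HE : is_act E) (x x' : E) (f : hom x x') :
  rnat (Rcell f).
Proof.
  pose proof (acat_of HE) as Hc.
  intros c d d' k p. unfold Rcell; simpl. rewrite !(cA Hc). f_equal.
  rewrite <- act_split1, <- act_split2 by auto. reflexivity.
Qed.
Lemma Lcell_lnat (M : MonCat) (E : Act M) (HM : is_moncat M) (HE : is_act E) (x x' : E) (f : hom x x') :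
  lnat (Lcell f).
Proof.
  pose proof (acat_of HE) as Hc.
  intros c' c d h p. unfold Lcell; simpl. rewrite <- !(cA Hc). f_equal.
  rewrite <- act_split1, <- act_split2 by auto. reflexivity.
Qed.

Lemma phiR_cpi (M : MonCat) (C : Act M) (HM : is_moncat M) (HC : is_act C) (m : M) (y : C)
  (c : C) (k n : M) (h : hom c (act n y)) (g : hom n (tens k m)) :
  phiR m y c k (cpi (RProf y) (RProf (E := selfAct M) m) (d := n) h g) = h >> actm g (idm y) >> aasc k m y.
Proof.
  pose proof (acat_of HC) as Hc. pose proof (mcat_of HM) as Hm.
  unfold phiR, cpi.
  apply (lift (F := fun w : ctriple (RProf y) (RProf (E := selfAct M) m) c k =>
      fst (projT2 w) >> actm (snd (projT2 w) : hom _ (tens k m)) (idm y) >> aasc k m y)).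
  intros a b []. cbn [projT1 projT2 fst snd]. simpl. f_equal.
  rewrite act_compid by auto. rewrite (cA Hc). reflexivity.
Qed.

Lemma phiL_cpi (M : MonCat) (D : Act M) (HM : is_moncat M) (HD : is_act D) (m : M) (v : D)
  (k n : M) (d : D) (g : hom (tens k m) n) (h : hom (act n v) d) :
  phiL m v k d (cpi (LProf (E := selfAct M) m) (LProf v) (d := n) g h) = aasci k m v >> actm g (idm v) >> h.
Proof.
  pose proof (acat_of HD) as Hc. pose proof (mcat_of HM) as Hm.
  unfold phiL, cpi.
  apply (lift (F := fun w : ctriple (LProf (E := selfAct M) m) (LProf v) k d =>
      aasci k m v >> actm (fst (projT2 w) : hom (tens k m) _) (idm v) >> snd (projT2 w))).
  intros a b []. cbn [projT1 projT2 fst snd]. simpl.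
  rewrite act_compid by auto. rewrite !(cA Hc). reflexivity.
Qed.

Lemma phiR_rnat (M : MonCat) (C : Act M) (HM : is_moncat M) (HC : is_act C) (m : M) (y : C) :
  rnat (phiR m y).
Proof.
  pose proof (acat_of HC) as Hc. pose proof (mcat_of HM) as Hm.
  intros c k k' t z. destruct (cpi_surj z) as (n & h & g & ->).
  rewrite prm_cpi by (apply RSelf_ichg; auto).
  rewrite !phiR_cpi by auto. simpl.
  rewrite act_compid by auto. rewrite !(cA Hc). do 2 f_equal.
  rewrite aasc_nat by auto. rewrite act_idid by auto. reflexivity.
Qed.

Lemma psiR_rnat (M : MonCat) (C : Act M) (HM : is_moncat M) (HC : is_act C) (m : M) (y : C)
  (psiR : Cell (RProf (act m y)) (pcomp (RProf y) (RProf (E := selfAct M) m)))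
  (HpsiR1 : forall c k w, phiR m y c k (psiR c k w) = w)
  (HpsiR2 : forall c k z, psiR c k (phiR m y c k z) = z) : rnat psiR.
Proof.
  intros c k k' t w. rewrite <- (HpsiR1 c k w) at 1. rewrite <- phiR_rnat by auto. apply HpsiR2.
Qed.

Lemma phiL_lnat (M : MonCat) (D : Act M) (HM : is_moncat M) (HD : is_act D) (m : M) (v : D) :
  lnat (phiL m v).
Proof.
  pose proof (acat_of HD) as Hc. pose proof (mcat_of HM) as Hm.
  intros k' k d t z. destruct (cpi_surj z) as (n & g & h & ->).
  rewrite plm_cpi by (apply LSelf_ichg; auto).
  rewrite !phiL_cpi by auto. simpl.
  rewrite act_compid by auto. rewrite <- !(cA Hc). do 2 f_equal.
  rewrite aasci_nat by auto. rewrite act_idid by auto. reflexivity.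
Qed.

Lemma psiL_lnat (M : MonCat) (D : Act M) (HM : is_moncat M) (HD : is_act D) (m : M) (v : D)
  (psiL : Cell (LProf (act m v)) (pcomp (LProf (E := selfAct M) m) (LProf v)))
  (HpsiL1 : forall k d w, phiL m v k d (psiL k d w) = w)
  (HpsiL2 : forall k d z, psiL k d (phiL m v k d z) = z) : lnat psiL.
Proof.
  intros k' k d t w. rewrite <- (HpsiL1 k d w) at 1. rewrite <- phiL_lnat by auto. apply HpsiL2.
Qed.

Lemma counit_cpi (M : MonCat) (HM : is_moncat M) (m k k' n : M) (a : hom k (tens n m)) (b : hom (tens n m) k') :
  counit m k k' (cpi (RProf (E := selfAct M) m) (LProf (E := selfAct M) m) (d := n) a b) = a >> b.
Proof.
  pose proof (mcat_of HM) as Hm.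
  unfold counit, cpi.
  apply (lift (F := fun w : ctriple (RProf (E := selfAct M) m) (LProf (E := selfAct M) m) k k' =>
     (fst (projT2 w) : hom k (tens _ m)) >> snd (projT2 w))).
  intros a0 b0 []. cbn [projT1 projT2 fst snd]. simpl. apply (cA Hm).
Qed.

Lemma counit_rnat (M : MonCat) (HM : is_moncat M) (m : M) : rnat (counit m).
Proof.
  pose proof (mcat_of HM) as Hm.
  intros k d d' t z. destruct (cpi_surj z) as (n & a & b & ->).
  rewrite prm_cpi by (apply LSelf_ichg; auto).
  rewrite !counit_cpi by auto. simpl. symmetry; apply (cA Hm).
Qed.

Lemma counit_lnat (M : MonCat) (HM : is_moncat M) (m : M) : lnat (counit m).
Proof.
  pose proof (mcat_of HM) as Hm.
  intros k' k d t z. destruct (cpi_surj z) as (n & a & b & ->).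
  rewrite plm_cpi by (apply RSelf_ichg; auto).
  rewrite !counit_cpi by auto. simpl. apply (cA Hm).
Qed.

Lemma lunit_cpi (M : MonCat) (D : Act M) (HM : is_moncat M) (HD : is_act D) (v : D)
  (k n : M) (d : D) (h : hom k n) (q : hom (act n v) d) :
  lunit (LProf v) k d (cpi (HomP M) (LProf v) (d := n) h q) = actm h (idm v) >> q.
Proof.
  pose proof (acat_of HD) as Hc.
  unfold lunit, cpi.
  apply (lift (F := fun w : ctriple (HomP M) (LProf v) k d => plm (p := LProf v) (fst (projT2 w)) (snd (projT2 w)))).
  intros a0 b0 []. cbn [projT1 projT2 fst snd]. simpl.
  rewrite act_compid by auto. apply (cA Hc).
Qed.

Lemma lunit_lnat (M : MonCat) (D : Act M) (HM : is_moncat M) (HD : is_act D) (v : D) :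
  lnat (lunit (LProf v)).
Proof.
  pose proof (acat_of HD) as Hc.
  intros k' k d t z. destruct (cpi_surj z) as (n & a & b & ->).
  rewrite plm_cpi by (apply HomP_ichg, mcat_of; auto).
  rewrite !lunit_cpi by auto. simpl. rewrite act_compid by auto. apply (cA Hc).
Qed.

Lemma tst_cpi (M : MonCat) (C D : Act M) (HM : is_moncat M) (HC : is_act C) (HD : is_act D)
  (x : C) (u : D) (n : M) (c : C) (d : D) (k : M) (p : hom c (act k x)) (q : hom (act k u) d) :
  tst (t := tcomp (RTamb x) (LTamb u)) n (cpi (RProf x) (LProf u) p q)
  = cpi (RProf x) (LProf u) (d := tens n k) (actm (idm n) p >> aasci n k x) (aasc n k u >> actm (idm n) q).
Proof.
  pose proof (acat_of HC) as Hc. pose proof (acat_of HD) as Hd. pose proof (mcat_of HM) as Hm.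
  simpl. unfold cpi at 1.
  apply (lift (F := fun t : ctriple (RProf x) (LProf u) c d =>
     cpi (RProf x) (LProf u) (tst (t := RTamb x) n (fst (projT2 t))) (tst (t := LTamb u) n (snd (projT2 t))))).
  intros a0 b0 []. cbn [projT1 projT2 fst snd]. simpl.
  set (A := actm (idm n) p0 >> aasci n d0 x).
  set (B := aasc n d' u >> actm (idm n) q0).
  transitivity (cpi (RProf x) (LProf u) (prm (p := RProf x) (tensm (idm n) f) A) B).
  - f_equal. subst A. simpl. rewrite (cA Hc). rewrite aasci_nat by auto.
    rewrite <- (cA Hc). f_equal. apply act_idcomp; auto.
  - rewrite cpi_rel. f_equal. subst B. simpl. rewrite <- (cA Hd). rewrite aasc_nat by auto.
    rewrite (cA Hd). f_equal. symmetry; apply act_idcomp; auto.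
Qed.

Arguments RProf_ichg {M E} HE x : rename.
Arguments LProf_ichg {M E} HE x : rename.
Arguments RSelf_ichg {M} HM m : rename.
Arguments LSelf_ichg {M} HM m : rename.
Arguments HomP_ichg {C} HC : rename.
Arguments idc_rnat {C D} P : rename.
Arguments idc_lnat {C D} P : rename.
Arguments assoc_inv_lnat {B C D E P Q R} HP HQ HR : rename.
Arguments counit_rnat {M} HM m : rename.
Arguments counit_lnat {M} HM m : rename.
Arguments lunit_lnat {M D} HM HD v : rename.
Theorem mainTheorem8 (M : MonCat) (C D : Act M)
  (HM : is_moncat M) (HC : is_act C) (HD : is_act D)
  (m : M) (x y : C) (u v : D)
  (al : hom x (act m y)) (be : hom (act m v) u)
  (* th : the 2-cell  R_x (x) L_u => R_y (x) L_v  in Tamb_{C,D} corresponding to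
     the optic l = <al | be>_m, i.e. sending the identity optic to l *)
  (th : Cell (pcomp (RProf x) (LProf u)) (pcomp (RProf y) (LProf v)))
  (Hth : @is_tamb_cell M C D (tcomp (RTamb x) (LTamb u)) (tcomp (RTamb y) (LTamb v)) th)
  (Hthl : th x u (id_optic x u) = optic al be)
  (* psiR, psiL : the inverses of the isomorphisms
     R_y (x) R_m ~= R_{m . y}  and  L_m (x) L_v ~= L_{m . v} *)
  (psiR : Cell (RProf (act m y)) (pcomp (RProf y) (RProf (E := selfAct M) m)))
  (psiL : Cell (LProf (act m v)) (pcomp (LProf (E := selfAct M) m) (LProf v)))
  (HpsiR1 : forall c k w, phiR m y c k (psiR c k w) = w)
  (HpsiR2 : forall c k z, psiR c k (phiR m y c k z) = z)
  (HpsiL1 : forall k d w, phiL m v k d (psiL k d w) = w)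
  (HpsiL2 : forall k d z, psiL k d (phiL m v k d z) = z) :
  forall (c : C) (d : D) (z : pcomp (RProf x) (LProf u) c d),
    th c d z = composite al be psiR psiL c d z.
Proof.
  Ltac ich HM Hc Hd Hm := repeat first [ apply pcomp_ichg | exact (RSelf_ichg HM _) | exact (LSelf_ichg HM _)
     | exact (RProf_ichg Hc _) | exact (RProf_ichg Hd _) | exact (LProf_ichg Hc _) | exact (LProf_ichg Hd _)
     | exact (HomP_ichg Hm) ].
  pose proof (acat_of HC) as Hc. pose proof (acat_of HD) as Hd. pose proof (mcat_of HM) as Hm.
  intros c d z. destruct (cpi_surj z) as (n & f & g & ->).
  assert (E1 : cpi (RProf x) (LProf u) f g = prm (p := tcomp (RTamb x) (LTamb u)) g
     (plm (p := tcomp (RTamb x) (LTamb u)) f (tst (t := tcomp (RTamb x) (LTamb u)) n (id_optic x u)))).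
  { unfold id_optic. rewrite tst_cpi by auto. simpl tprof.
    rewrite plm_cpi by (apply RProf_ichg; auto). rewrite prm_cpi by (apply LProf_ichg; auto).
    simpl. rewrite act_unit_r by auto.
    change (f >> actm (mrhoi n) (idm x)) with (prm (p := RProf x) (mrhoi n) f).
    rewrite cpi_rel. f_equal. simpl. rewrite <- (cA Hd). rewrite act_unit_r' by auto. symmetry; apply (cL Hd). }
  rewrite E1 at 1. clear E1. destruct Hth as [[Hl Hr] Hs]. rewrite Hr, Hl, Hs, Hthl. unfold optic.
  rewrite tst_cpi by auto. simpl tprof.
  rewrite plm_cpi by (apply RProf_ichg; auto). rewrite prm_cpi by (apply LProf_ichg; auto).
  unfold composite.
  rewrite hcomp_cpi by (apply Rcell_rnat || apply Lcell_lnat; auto).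
  rewrite (hcomp_cpi (psiR_rnat HM HC HpsiR1 HpsiR2) (psiL_lnat HM HD HpsiL1 HpsiL2)).
  assert (PR : forall k (F : hom c (act k (act m y))), psiR c k F =
     cpi (RProf y) (RProf (E := selfAct M) m) (d := tens k m) (F >> aasci k m y) (idm (tens k m))).
  { intros k F. rewrite <- HpsiR2. f_equal. rewrite phiR_cpi by auto. simpl.
    rewrite act_idid by auto. rewrite (cR Hc). rewrite (cA Hc). rewrite aasc_iso2 by auto.
    symmetry; apply (cR Hc). }
  assert (PL : forall k (G : hom (act k (act m v)) d), psiL k d G =
     cpi (LProf (E := selfAct M) m) (LProf v) (d := tens k m) (idm (tens k m)) (aasc k m v >> G)).
  { intros k G. rewrite <- HpsiL2. f_equal. rewrite phiL_cpi by auto. simpl.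
    rewrite act_idid by auto. rewrite (cR Hd). rewrite <- (cA Hd). rewrite aasc_iso2 by auto.
    symmetry; apply (cL Hd). }
  rewrite PR, PL. clear PR PL.
  rewrite assoc_cpi. all: try ich HM Hc Hd Hm.
  rewrite (hcomp_cpi (idc_rnat _) (assoc_inv_lnat (RSelf_ichg HM m) (LSelf_ichg HM m) (LProf_ichg Hd v))).
  rewrite assoc_inv_cpi by ich HM Hc Hd Hm.
  assert (HL : lnat (hcomp (counit m) (idc (LProf v)))).
  { apply hcomp_lnat. ich HM Hc Hd Hm. ich HM Hc Hd Hm. apply counit_rnat; auto. apply counit_lnat; auto. apply idc_lnat. }
  rewrite (hcomp_cpi (idc_rnat _) HL).
  rewrite (hcomp_cpi (counit_rnat HM m) (idc_lnat _)).
  rewrite counit_cpi by auto.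
  rewrite (hcomp_cpi (idc_rnat _) (lunit_lnat HM HD v)).
  rewrite lunit_cpi by auto.
  unfold idc, Rcell, Lcell. simpl.
  f_equal.
  - symmetry; apply (cA Hc).
  - rewrite (cL Hm), act_idid by auto. rewrite (cL Hd). apply (cA Hd).
Qed.
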